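(* Let $g:(0,\infty)\to(0,\infty)$ be positive and nondecreasing with $\lim_{s\to0}g(s)/s=0$, and set $F(\lambda):=\int_\lambda^1\frac{ds}{g(s)}$ for $0<\lambda\le1$ (so that $F^{-1}:[0,\infty)\to(0,1]$ is well defined, continuous and strictly decreasing). Then for every $k>0$ there exists a constant $C>1$, depending only on $k$ and $g$, such that $$F^{-1}(t-k)\le C\,F^{-1}(t)\qquad\text{for all }t\ge k .$$ *)

(* Defs.v *)
From Stdlib Require Import Reals ClassicalEpsilon.
From Coquelicot Require Import Coquelicot.
Open Scope R_scope.

Definition F (g : R -> R) (lam : R) : R := RInt (fun s => / g s) lam 1.

(* F^{-1}(t): the (unique, under the hypotheses of the lemma) lambda in (0,1]
   with F(lambda) = t; chosen by Hilbert epsilon (default 1 if none exists). *)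
Definition Finv (g : R -> R) (t : R) : R :=
  epsilon (inhabits 1) (fun lam => 0 < lam <= 1 /\ F g lam = t).

(* Main.v *)
Require Import Defs.
From Stdlib Require Import Reals Lra Lia ZArith Classical ClassicalEpsilon.
From Coquelicot Require Import Coquelicot.
Open Scope R_scope.

Lemma const_case (phi : R -> R) a b :
  a <= b -> (forall x y, x <= y -> phi y <= phi x) -> phi b = phi a ->
  ex_RInt phi a b.
Proof.
  intros Hab Hm He.
  apply (ex_RInt_ext (fun _ => phi a)).
  2: apply ex_RInt_const.
  intros x Hx. rewrite Rmin_left in Hx by lra. rewrite Rmax_right in Hx by lra.
  assert (phi x <= phi a) by (apply Hm; lra).
  assert (phi b <= phi x) by (apply Hm; lra). lra.
Qed.

Lemma step_int (eps : R) (Heps : 0 < eps) : forall (N : nat) a b (phi : R -> R),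
  a <= b -> (forall x y, x <= y -> phi y <= phi x) ->
  (forall x, exists z, phi x = IZR z * eps) ->
  phi a - phi b <= INR N * eps -> ex_RInt phi a b.
Proof.
  assert (gap : forall (phi : R -> R), (forall x, exists z, phi x = IZR z * eps) ->
     forall x y, phi y < phi x -> phi y <= phi x - eps).
  { intros phi Hz x y Hl. destruct (Hz x) as [zx Hx]. destruct (Hz y) as [zy Hy].
    rewrite Hx, Hy in *. assert (IZR zy < IZR zx).
    { apply Rmult_lt_reg_r with eps; lra. }
    apply lt_IZR in H. assert (IZR (zy + 1) <= IZR zx) by (apply IZR_le; lia).
    rewrite plus_IZR in H0. nra. }
  induction N as [|N IH]; intros a b phi Hab Hm Hz Hd.
  - apply const_case; auto. simpl in Hd. assert (phi b <= phi a) by (apply Hm; lra). lra.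
  - destruct (Req_dec (phi b) (phi a)) as [He|Hne].
    { apply const_case; auto. }
    assert (Hba : phi b <= phi a) by (apply Hm; lra).
    assert (Hlt : phi b < phi a) by lra.
    set (E := fun x => a <= x <= b /\ phi x = phi a).
    destruct (completeness E) as [c [Hub Hlub]].
    { exists b. intros x [Hx _]. lra. }
    { exists a. split; [lra|reflexivity]. }
    assert (Hac : a <= c) by (apply Hub; split; [lra|reflexivity]).
    assert (Hcb : c <= b) by (apply Hlub; intros x [Hx _]; lra).
    apply ex_RInt_Chasles with c.
    + apply (ex_RInt_ext (fun _ => phi a)). 2: apply ex_RInt_const.
      intros x Hx. rewrite Rmin_left in Hx by lra. rewrite Rmax_right in Hx by lra.
      destruct (classic (exists y, E y /\ x < y)) as [[y [[Hy1 Hy2] Hxy]]|Hn].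
      * assert (phi y <= phi x) by (apply Hm; lra).
        assert (phi x <= phi a) by (apply Hm; lra). lra.
      * exfalso. assert (c <= x).
        { apply Hlub. intros y Hy. destruct (Rle_dec y x); auto.
          exfalso; apply Hn; exists y; split; auto; lra. }
        lra.
    + set (psi := fun x => Rmin (phi x) (phi a - eps)).
      apply (ex_RInt_ext psi).
      * intros x Hx. rewrite Rmin_left in Hx by lra. rewrite Rmax_right in Hx by lra.
        unfold psi. apply Rmin_left.
        assert (phi x <= phi a) by (apply Hm; lra).
        assert (phi x <> phi a).
        { intro Heq. assert (x <= c) by (apply Hub; split; [lra|auto]). lra. }
        apply gap; auto; lra.
      * apply IH; auto.
        -- intros x y Hxy. unfold psi. assert (phi y <= phi x) by (apply Hm; auto).
           unfold Rmin; repeat destruct Rle_dec; lra.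
        -- intros x. unfold psi, Rmin. destruct Rle_dec; auto.
           destruct (Hz a) as [za Hza]. exists (za - 1)%Z. rewrite minus_IZR. lra.
        -- unfold psi. assert (phi b <= phi a - eps) by (apply gap; auto).
           rewrite (Rmin_left (phi b)) by lra. rewrite S_INR in Hd.
           assert (Rmin (phi c) (phi a - eps) <= phi a - eps) by apply Rmin_r. lra.
Qed.

Lemma Int_part_mono x y : x <= y -> (Int_part x <= Int_part y)%Z.
Proof.
  intros H. destruct (base_Int_part x). destruct (base_Int_part y).
  assert (IZR (Int_part x) < IZR (Int_part y) + 1) by lra.
  rewrite <- plus_IZR in H4. apply lt_IZR in H4. lia.
Qed.

Lemma mono_int (phi : R -> R) a b :
  a <= b -> (forall x y, x <= y -> phi y <= phi x) -> ex_RInt phi a b.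
Proof.
  intros Hab Hm.
  set (e := fun n : nat => / INR (S n)).
  assert (He : forall n, 0 < e n).
  { intros n; unfold e; apply Rinv_0_lt_compat, lt_0_INR; lia. }
  set (q := fun (n : nat) x => IZR (Int_part (phi x / e n)) * e n).
  assert (Hq : forall n x, Rabs (q n x - phi x) < e n).
  { intros n x. unfold q. destruct (base_Int_part (phi x / e n)) as [H1 H2].
    pose proof (He n).
    assert (phi x = (phi x / e n) * e n) by (field; lra).
    rewrite H0 at 2. rewrite Rabs_left1.
    - assert (- (IZR (Int_part (phi x / e n)) * e n - phi x / e n * e n)
        = (phi x / e n - IZR (Int_part (phi x / e n))) * e n) by ring.
      rewrite H3. apply Rlt_le_trans with (1 * e n); [apply Rmult_lt_compat_r; lra | lra].
    - assert (0 <= (phi x / e n - IZR (Int_part (phi x / e n))) * e n) by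
        (apply Rmult_le_pos; lra). lra. }
  assert (Hint : forall n, ex_RInt (q n) a b).
  { intros n. destruct (INR_unbounded ((q n a - q n b) / e n)) as [N HN].
    apply (step_int (e n) (He n) N); auto.
    - intros x y Hxy. unfold q. apply Rmult_le_compat_r. left; apply He.
      apply IZR_le, Int_part_mono. unfold Rdiv. apply Rmult_le_compat_r.
      left; apply Rinv_0_lt_compat, He. auto.
    - intros x. exists (Int_part (phi x / e n)). reflexivity.
    - pose proof (He n). apply Rmult_lt_compat_r with (r := e n) in HN; auto.
      unfold Rdiv in HN. rewrite Rmult_assoc, Rinv_l in HN by lra. lra. }
  destruct (filterlim_RInt (V := R_CompleteNormedModule) q a b eventually eventually_filter phi
     (fun n => RInt (q n) a b)) as [If [_ HIf]].
  - intros n. apply RInt_correct, Hint.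
  - apply filterlim_locally. intros eps.
    destruct (INR_unbounded (/ eps)) as [N HN].
    exists N. intros n Hn t. pose proof (cond_pos eps).
    change (Rabs (q n t - phi t) < eps).
    eapply Rlt_le_trans. apply Hq. unfold e.
    assert (INR N <= INR (S n)) by (apply le_INR; lia).
    assert (0 < / eps) by (apply Rinv_0_lt_compat; lra).
    rewrite <- (Rinv_inv eps). apply Rinv_le_contravar; lra.
  - exists If. exact HIf.
Qed.


Lemma ex_f (g : R -> R) (g_pos : forall s, 0 < s -> 0 < g s)
  (g_mono : forall s t, 0 < s -> s <= t -> g s <= g t) :
  forall x y, 0 < x -> 0 < y -> ex_RInt (fun s => / g s) x y.
Proof.
  assert (H : forall x y, 0 < x -> x <= y -> ex_RInt (fun s => / g s) x y).
  { intros x y Hx Hxy.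
    apply (ex_RInt_ext (fun s => / g (Rmax x (Rmin s y)))).
    - intros s Hs. rewrite Rmin_left in Hs by lra. rewrite Rmax_right in Hs by lra.
      rewrite Rmin_left by lra. rewrite Rmax_right by lra. reflexivity.
    - apply mono_int; auto. intros s t Hst.
      assert (x <= Rmax x (Rmin s y)) by apply Rmax_l.
      assert (Rmax x (Rmin s y) <= Rmax x (Rmin t y)).
      { unfold Rmax, Rmin; repeat destruct Rle_dec; lra. }
      apply Rinv_le_contravar. apply g_pos; lra. apply g_mono; lra. }
  intros x y Hx Hy. destruct (Rle_dec x y). apply H; auto.
  apply ex_RInt_swap, H; lra.
Qed.

Lemma F_diff (g : R -> R) (g_pos : forall s, 0 < s -> 0 < g s)
  (g_mono : forall s t, 0 < s -> s <= t -> g s <= g t) :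
  forall x y, 0 < x -> 0 < y -> F g x - F g y = RInt (fun s => / g s) x y.
Proof.
  intros x y Hx Hy. unfold F.
  rewrite <- (RInt_Chasles (fun s => / g s) x y 1).
  - change (RInt (fun s => / g s) x y + RInt (fun s => / g s) y 1 - RInt (fun s => / g s) y 1
      = RInt (fun s => / g s) x y). ring.
  - apply ex_f; auto.
  - apply ex_f; auto; lra.
Qed.

Lemma RInt_ge (g : R -> R) (g_pos : forall s, 0 < s -> 0 < g s)
  (g_mono : forall s t, 0 < s -> s <= t -> g s <= g t) :
  forall x y, 0 < x -> x <= y -> (y - x) * / g y <= RInt (fun s => / g s) x y.
Proof.
  intros x y Hx Hxy.
  assert (RInt (fun _ => / g y) x y <= RInt (fun s => / g s) x y).
  { apply RInt_le; auto. apply ex_RInt_const. apply ex_f; auto; lra.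
    intros s Hs. apply Rinv_le_contravar. apply g_pos; lra. apply g_mono; lra. }
  rewrite RInt_const in H. exact H.
Qed.

Lemma RInt_nonneg (g : R -> R) (g_pos : forall s, 0 < s -> 0 < g s)
  (g_mono : forall s t, 0 < s -> s <= t -> g s <= g t) :
  forall x y, 0 < x -> x <= y -> 0 <= RInt (fun s => / g s) x y.
Proof.
  intros x y Hx Hxy. eapply Rle_trans. 2: apply RInt_ge; auto.
  apply Rmult_le_pos. lra. left; apply Rinv_0_lt_compat, g_pos; lra.
Qed.

Lemma F_lip (g : R -> R) (g_pos : forall s, 0 < s -> 0 < g s)
  (g_mono : forall s t, 0 < s -> s <= t -> g s <= g t) :
  forall s0 a b, 0 < s0 -> s0 <= a -> a <= b ->
  Rabs (F g a - F g b) <= (b - a) * / g s0.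
Proof.
  intros s0 a b Hs0 Ha Hab. rewrite F_diff; auto; try lra.
  apply abs_RInt_le_const; auto. apply ex_f; auto; lra.
  intros t Ht. rewrite Rabs_pos_eq.
  apply Rinv_le_contravar. apply g_pos; lra. apply g_mono; lra.
  left; apply Rinv_0_lt_compat, g_pos; lra.
Qed.

Lemma H_cont (g : R -> R) (g_pos : forall s, 0 < s -> 0 < g s)
  (g_mono : forall s t, 0 < s -> s <= t -> g s <= g t) :
  forall s0, 0 < s0 -> forall x, continuous (fun x => F g (Rmax s0 x)) x.
Proof.
  intros s0 Hs0 x. apply filterlim_locally. intros eps.
  pose proof (g_pos s0 Hs0). pose proof (cond_pos eps).
  assert (Hd : 0 < eps * g s0) by (apply Rmult_lt_0_compat; lra).
  exists (mkposreal _ Hd). intros y Hy. change (Rabs (y - x) < eps * g s0) in Hy.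
  change (Rabs (F g (Rmax s0 y) - F g (Rmax s0 x)) < eps).
  assert (Hm : Rabs (Rmax s0 y - Rmax s0 x) <= Rabs (y - x)).
  { unfold Rmax; repeat destruct Rle_dec; unfold Rabs; repeat destruct Rcase_abs; lra. }
  assert (Rabs (F g (Rmax s0 y) - F g (Rmax s0 x)) <= Rabs (Rmax s0 y - Rmax s0 x) * / g s0).
  { destruct (Rle_dec (Rmax s0 y) (Rmax s0 x)).
    - rewrite (Rabs_left1 (Rmax s0 y - Rmax s0 x)) by lra.
      replace (- (Rmax s0 y - Rmax s0 x)) with (Rmax s0 x - Rmax s0 y) by ring.
      apply F_lip; auto. apply Rmax_l.
    - rewrite Rabs_minus_sym. rewrite (Rabs_pos_eq (Rmax s0 y - Rmax s0 x)) by lra.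
      apply F_lip; auto. apply Rmax_l. lra. }
  eapply Rle_lt_trans. apply H1.
  apply Rle_lt_trans with (Rabs (y - x) * / g s0).
  apply Rmult_le_compat_r; auto. left; apply Rinv_0_lt_compat; lra.
  apply Rmult_lt_reg_r with (g s0); auto. rewrite Rmult_assoc, Rinv_l by lra. lra.
Qed.

Lemma small (g : R -> R)
  (g_lim : filterlim (fun s => g s / s) (at_right 0) (locally 0)) :
  forall e, 0 < e -> exists d, 0 < d <= 1 /\ forall s, 0 < s < d -> g s < e * s.
Proof.
  intros e He. destruct (proj1 (filterlim_locally _ _) g_lim (mkposreal e He)) as [del Hdel].
  pose proof (cond_pos del).
  exists (Rmin del 1). split. split. apply Rmin_glb_lt; lra. apply Rmin_r.
  intros s Hs. assert (s < del) by (pose proof (Rmin_l del 1); lra).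
  assert (Hb : ball 0 del s).
  { change (Rabs (s - 0) < del). rewrite Rabs_pos_eq; lra. }
  specialize (Hdel s Hb (proj1 Hs)). change (Rabs (g s / s - 0) < e) in Hdel.
  rewrite Rminus_0_r in Hdel. apply Rabs_def2 in Hdel.
  destruct Hdel as [Hd1 _]. apply Rmult_lt_compat_r with (r := s) in Hd1; [|lra].
  unfold Rdiv in Hd1. rewrite Rmult_assoc, Rinv_l in Hd1 by lra. lra.
Qed.

Lemma diverge (g : R -> R) (g_pos : forall s, 0 < s -> 0 < g s)
  (g_mono : forall s t, 0 < s -> s <= t -> g s <= g t)
  (g_lim : filterlim (fun s => g s / s) (at_right 0) (locally 0)) :
  forall T, exists c, 0 < c /\ forall s, 0 < s < c -> T < F g s.
Proof.
  intros T. destruct (small g g_lim 1 Rlt_0_1) as [d1 [Hd1 Hs]].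
  exists (Rmin d1 (exp (ln d1 - Rabs T))). split.
  { apply Rmin_glb_lt. lra. apply exp_pos. }
  intros s [Hs0 Hsc].
  assert (s < d1) by (pose proof (Rmin_l d1 (exp (ln d1 - Rabs T))); lra).
  assert (Hl : ln s < ln d1 - Rabs T).
  { rewrite <- (ln_exp (ln d1 - Rabs T)). apply ln_increasing; auto.
    pose proof (Rmin_r d1 (exp (ln d1 - Rabs T))); lra. }
  replace (F g s) with (RInt (fun u => / g u) s d1 + F g d1)
    by (rewrite <- F_diff; auto; lra).
  assert (0 <= F g d1) by (unfold F; apply RInt_nonneg; auto; lra).
  assert (Hi : is_RInt (fun u => / u) s d1 (minus (ln d1) (ln s))).
  { apply (is_RInt_derive ln). 
    - intros x Hx. rewrite Rmin_left in Hx by lra. rewrite Rmax_right in Hx by lra.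
      apply is_derive_ln; lra.
    - intros x Hx. rewrite Rmin_left in Hx by lra. rewrite Rmax_right in Hx by lra.
      apply continuous_Rinv; lra. }
  assert (ln d1 - ln s <= RInt (fun u => / g u) s d1).
  { change (ln d1 - ln s) with (minus (ln d1) (ln s)).
    rewrite <- (is_RInt_unique _ _ _ _ Hi). apply RInt_le. lra.
    exists (minus (ln d1) (ln s)); exact Hi. apply ex_f; auto; lra.
    intros x Hx. apply Rinv_le_contravar. apply g_pos; lra.
    left; replace x with (1 * x) at 2 by ring. apply Hs; lra. }
  pose proof (Rle_abs T). lra.
Qed.

Lemma exist_inv (g : R -> R) (g_pos : forall s, 0 < s -> 0 < g s)
  (g_mono : forall s t, 0 < s -> s <= t -> g s <= g t)
  (g_lim : filterlim (fun s => g s / s) (at_right 0) (locally 0)) :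
  forall t, 0 <= t -> 0 < Finv g t <= 1 /\ F g (Finv g t) = t.
Proof.
  intros t Ht. unfold Finv. apply epsilon_spec.
  destruct (diverge g g_pos g_mono g_lim t) as [c [Hc Hdiv]].
  set (s0 := Rmin (c / 2) (1 / 2)).
  assert (Hs0 : 0 < s0 < c /\ s0 <= 1 / 2).
  { unfold s0. split. split. apply Rmin_glb_lt; lra.
    pose proof (Rmin_l (c/2) (1/2)); lra. apply Rmin_r. }
  assert (HF1 : F g 1 = 0) by (unfold F; rewrite RInt_point; reflexivity).
  assert (HFs0 : t < F g s0) by (apply Hdiv; lra).
  destruct (IVT_gen_consistent (fun x => F g (Rmax s0 x)) s0 1 t) as [x [Hx Hxt]].
  - apply H_cont; auto; lra.
  - rewrite Rmax_left by lra. rewrite Rmax_right by lra. rewrite HF1.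
    rewrite Rmin_right by lra. rewrite Rmax_left by lra. lra.
  - rewrite Rmin_left in Hx by lra. rewrite Rmax_right in Hx by lra.
    rewrite Rmax_right in Hxt by lra. exists x. split; auto; lra.
Qed.

Theorem lemma4p12 (g : R -> R)
  (g_pos : forall s, 0 < s -> 0 < g s)
  (g_mono : forall s t, 0 < s -> s <= t -> g s <= g t)
  (g_lim : filterlim (fun s => g s / s) (at_right 0) (locally 0))
  (k : R) (hk : 0 < k) :
  exists C : R, 1 < C /\
    forall t : R, k <= t -> Finv g (t - k) <= C * Finv g t.
Proof.
  assert (He : 0 < / (2 * k)) by (apply Rinv_0_lt_compat; lra).
  destruct (small g g_lim _ He) as [d [Hd Hsmall]].
  destruct (diverge g g_pos g_mono g_lim (F g d + k)) as [c [Hc Hdiv]].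
  assert (Hic : 0 < / c) by (apply Rinv_0_lt_compat; lra).
  exists (2 + / c). split. lra.
  intros t Ht.
  destruct (exist_inv g g_pos g_mono g_lim t) as [[Hl0 Hl1] Hlt]; [lra|].
  destruct (exist_inv g g_pos g_mono g_lim (t - k)) as [[Hm0 Hm1] Hmt]; [lra|].
  set (l := Finv g t) in *. set (m := Finv g (t - k)) in *.
  destruct (Rle_dec m (2 * l)) as [Hle|Hgt].
  { assert (0 <= / c * l) by (apply Rmult_le_pos; lra). nra. }
  assert (Hk : k = RInt (fun s => / g s) l m).
  { rewrite <- F_diff; auto. lra. }
  assert (Hsplit : RInt (fun s => / g s) l m
     = RInt (fun s => / g s) l (m/2) + RInt (fun s => / g s) (m/2) m).
  { symmetry. apply (RInt_Chasles (fun s => / g s) l (m/2) m);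
    apply ex_f; auto; lra. }
  assert (H1 : 0 <= RInt (fun s => / g s) l (m/2)) by (apply RInt_nonneg; auto; lra).
  assert (H2 : (m - m/2) * / g m <= RInt (fun s => / g s) (m/2) m)
    by (apply RInt_ge; auto; lra).
  assert (Hgm : 0 < g m) by auto.
  assert (Hmg : m <= 2 * k * g m).
  { assert ((m/2) * / g m <= k) by lra.
    apply Rmult_le_compat_r with (r := g m) in H; [|lra].
    rewrite Rmult_assoc, Rinv_l in H by lra. lra. }
  assert (Hmd : d <= m).
  { destruct (Rle_dec d m); auto. exfalso.
    assert (g m < / (2 * k) * m) by (apply Hsmall; lra).
    assert (2 * k * g m < 2 * k * (/ (2 * k) * m)) by (apply Rmult_lt_compat_l; lra).
    rewrite <- Rmult_assoc, Rinv_r, Rmult_1_l in H0 by lra. lra. }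
  assert (HFm : F g m <= F g d).
  { assert (0 <= F g d - F g m) by (rewrite F_diff; auto; try lra; apply RInt_nonneg; auto; lra).
    lra. }
  assert (Hlc : c <= l).
  { destruct (Rle_dec c l); auto. exfalso.
    assert (F g d + k < F g l) by (apply Hdiv; lra). lra. }
  assert (1 <= / c * l).
  { apply Rmult_le_reg_l with c; auto. rewrite <- Rmult_assoc, Rinv_r by lra. lra. }
  nra.
Qed.
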